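(* Let $k\ge 1$, $n_1,\dots,n_k\in\mathbb{N}$ and $m\in\mathbb{N}$ with $m\ge2$. For each $j$ let $I_j:\ell_2^{2n_j,\mathbb{R}}\to\ell_\infty^{N_j,\mathbb{R}}$ be an injective linear operator with $\|I_j\|\le1$ and $\|I_j^{-1}\|\le\frac{m}{m-1}$, and put $c^j_i=I_j(e_i)\in\mathbb{R}^{N_j}$ for $1\le i\le 2n_j$, with coordinates $c^j_i(s)$. Let $\rho=(\rho_{i_1,\dots,i_k})\in\mathbb{C}^{n_1}\otimes\cdots\otimes\mathbb{C}^{n_k}$. Consider as variables a complex array $\lambda=(\lambda_{i_1,\dots,i_k})$, $1\le i_j\le n_j$ (equivalently, the $2n_1\cdots n_k$ real numbers $\operatorname{Re}\lambda_{i_1,\dots,i_k},\operatorname{Im}\lambda_{i_1,\dots,i_k}$), and define the real array $\tilde\lambda_{i_1,\dots,i_k}$, $1\le i_j\le 2n_j$, as follows: for $j\le k$ let $i'_j=i_j$ if $i_j\le n_j$ and $i'_j=i_j-n_j$ if $i_j>n_j$; let $t$ be the number of $j\in\{1,\dots,k-1\}$ with $i_j>n_j$; then $\tilde\lambda_{i_1,\dots,i_k}=\operatorname{Re}(\mathrm{i}^{t}\lambda_{i'_1,\dots,i'_k})$ if $i_k\le n_k$ and $\tilde\lambda_{i_1,\dots,i_k}=\operatorname{Im}(\mathrm{i}^{t}\lambda_{i'_1,\dots,i'_k})$ if $i_k>n_k$ (here $\mathrm{i}=\sqrt{-1}$). Let $V$ be the optimal value of the linear programming problem: maximize $$\sum_{i_1,\dots,i_k=1}^{n_1,\dots,n_k}\operatorname{Re}(\rho_{i_1,\dots,i_k})\tilde\lambda_{i_1,\dots,i_k}-\sum_{i_1,\dots,i_{k-1}=1}^{n_1,\dots,n_{k-1}}\sum_{i_k=n_k+1}^{2n_k}\operatorname{Im}(\rho_{i_1,\dots,i_{k-1},i_k-n_k})\tilde\lambda_{i_1,\dots,i_k}$$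 subject to $$-1\le\sum_{i_1,\dots,i_k=1}^{2n_1,\dots,2n_k}\tilde\lambda_{i_1,\dots,i_k}\,c^1_{i_1}(s_1)\cdots c^k_{i_k}(s_k)\le1\quad\text{for all }1\le s_j\le N_j,\ 1\le j\le k.$$ Then $\pi(\rho)\le V\le\left(\frac{m}{m-1}\right)^k\pi(\rho)$, where $\pi(\rho)$ is the norm of $\rho$ in $\bigotimes_{j=1,\pi}^k\ell_2^{n_j,\mathbb{C}}$; i.e. $V$ equals this norm up to a relative error bounded by $\left(\frac{m}{m-1}\right)^k-1$.
   Context: $\ell_2^{n,\mathbb{C}}$ is $\mathbb{C}^n$ with the Euclidean norm, $\ell_2^{n,\mathbb{R}}$ is $\mathbb{R}^n$ with the Euclidean norm, $\ell_\infty^{N,\mathbb{R}}$ is $\mathbb{R}^N$ with the sup-norm, and $e_1,e_2,\dots$ is the canonical basis. For injective $I$, $\|I^{-1}\|$ is the norm of the inverse on the range of $I$. Tensors in $\mathbb{C}^{n_1}\otimes\cdots\otimes\mathbb{C}^{n_k}$ are identified with coefficient arrays with respect to $e_{i_1}\otimes\cdots\otimes e_{i_k}$. The projective norm on $\bigotimes_{j=1}^kX_j$ is $\pi(u)=\inf\{\sum_{i=1}^r\|u^1_i\|\cdots\|u^k_i\|: u=\sum_{i=1}^r u^1_i\otimes\cdots\otimes u^k_i\}$; $\bigotimes_{j=1,\pi}^kX_j$ denotes the tensor product with this norm. The array $\tilde\lambda$ is the coefficient array of the real $(k-1)$-linear map $\mathbb{R}^{2n_1}\times\cdots\times\mathbb{R}^{2n_{k-1}}\to\mathbb{R}^{2n_k}$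 obtained from the complex $(k-1)$-linear map associated with $\lambda$ by identifying $\mathbb{C}^{n}$ with $\mathbb{R}^{2n}$ via $z\mapsto(\operatorname{Re}z,\operatorname{Im}z)$. *)

(* Defs.v *)
From HB Require Import structures.
From mathcomp Require Import all_boot all_order all_algebra.
From mathcomp Require Import complex.
From mathcomp Require Import classical_sets reals.
Set Implicit Arguments. Unset Strict Implicit. Unset Printing Implicit Defensive.
Import Order.TTheory GRing.Theory Num.Theory.
Local Open Scope ring_scope.

(* Multi-indices (i_1,...,i_k) with 0 <= i_j < n j (0-based indexing). *)
Definition midx (k : nat) (n : 'I_k -> nat) := {dffun forall j : 'I_k, 'I_(n j)}.

Lemma halfidx_subproof (n : nat) (i : 'I_(n.*2)) : ((if i < n then val i else i - n) < n)%N.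
Proof.
case: ifP => // /negbT; rewrite -leqNgt => Hn.
by rewrite ltn_subLR // addnn ltn_ord.
Qed.
Definition halfidx (n : nat) (i : 'I_(n.*2)) : 'I_n := Ordinal (halfidx_subproof i).

Definition prime_idx (k : nat) (n : 'I_k -> nat) (i : midx (fun j => (n j).*2)) : midx n :=
  [ffun j => halfidx (i j)].

Section Defs.
Variable R : realType.

Definition l2R (p : nat) (x : 'rV[R]_p) : R := Num.sqrt (\sum_(i < p) x 0 i ^+ 2).
Definition linfR (p : nat) (y : 'rV[R]_p) : R := \big[Num.max/0]_(s < p) `|y 0 s|.
Definition l2C (p : nat) (x : 'I_p -> R[i]) : R :=
  Num.sqrt (\sum_(i < p) (complex.Re (x i) ^+ 2 + complex.Im (x i) ^+ 2)).

Definition projnorm (k : nat) (n : 'I_k -> nat) (rho : midx n -> R[i]) : R :=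
  inf [set x : R | exists (r : nat) (u : 'I_r -> forall j : 'I_k, 'I_(n j) -> R[i]),
        (forall i : midx n, rho i = \sum_(l < r) \prod_(j < k) u l j (i j)) /\
        x = \sum_(l < r) \prod_(j < k) l2C (u l j)].

Definition lamtilde (k : nat) (n : 'I_k -> nat) (lam : midx n -> R[i])
    (i : midx (fun j => (n j).*2)) : R :=
  let t := #|[set j : 'I_k | (val j < k.-1)%N && (n j <= i j)%N]| in
  let z := ('i%C ^+ t) * lam (prime_idx i) in
  if [exists j : 'I_k, (val j == k.-1) && (n j <= i j)%N] then complex.Im z else complex.Re z.

Definition lp_obj (k : nat) (n : 'I_k -> nat) (rho : midx n -> R[i])
    (lam : midx n -> R[i]) : R :=
  \sum_(i : midx (fun j => (n j).*2) | [forall j, (i j < n j)%N])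
     complex.Re (rho (prime_idx i)) * lamtilde lam i
  - \sum_(i : midx (fun j => (n j).*2) |
          [forall j, (val j < k.-1)%N ==> (i j < n j)%N] &&
          [exists j : 'I_k, (val j == k.-1) && (n j <= i j)%N])
     complex.Im (rho (prime_idx i)) * lamtilde lam i.

(* constraints of the LP; I j is the matrix of I_j (row i = c^j_i = I_j(e_i)) *)
Definition lp_feasible (k : nat) (n N : 'I_k -> nat)
    (I : forall j : 'I_k, 'M[R]_((n j).*2, N j)) (lam : midx n -> R[i]) : Prop :=
  forall s : midx N,
    -1 <= \sum_(i : midx (fun j => (n j).*2)) lamtilde lam i * \prod_(j < k) I j (i j) (s j)
    <= 1.

Definition lp_value (k : nat) (n N : 'I_k -> nat)
    (I : forall j : 'I_k, 'M[R]_((n j).*2, N j)) (rho : midx n -> R[i]) : R :=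
  sup [set lp_obj rho lam | lam in [set lam | lp_feasible I lam]].

End Defs.

(* Main.v *)
Require Import Defs.
From HB Require Import structures.
From mathcomp Require Import all_boot all_order all_algebra.
From mathcomp Require Import complex.
From mathcomp Require Import boolp classical_sets reals.
From mathcomp.algebra_tactics Require Import ring lra.
Set Implicit Arguments. Unset Strict Implicit. Unset Printing Implicit Defensive.
Import Order.TTheory GRing.Theory Num.Theory.
Local Open Scope ring_scope.

Section HBSec.
Variable R : realType.
Variable V : lmodType R.
Variable p : V -> R.
Hypothesis p_ge0 : forall x, 0 <= p x.
Hypothesis p_add : forall x y, p (x + y) <= p x + p y.
Hypothesis p_hom : forall (a : R) x, 0 < a -> p (a *: x) = a * p x.

Definition subsp (S : V -> Prop) :=
  [/\ S 0, (forall x y, S x -> S y -> S (x + y)) & (forall a x, S x -> S (a *: x))].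
Definition pf (S : V -> Prop) (G : V -> R) :=
  [/\ subsp S, (forall x y, S x -> S y -> G (x + y) = G x + G y),
      (forall a x, S x -> G (a *: x) = a * G x) & (forall x, S x -> G x <= p x)].

Lemma pf_G0 S G : pf S G -> G 0 = 0.
Proof.
case=> [[S0 _ _] _ Gh _]; have := Gh 0 0 S0; rewrite scale0r mul0r; exact.
Qed.

Lemma subspB S x y : subsp S -> S x -> S y -> S (x - y).
Proof. by case=> _ Sa Sh Sx Sy; apply: Sa => //; rewrite -scaleN1r; apply: Sh. Qed.

Lemma ext_c S G y (c : R) : pf S G -> ~ S y ->
  (forall x, S x -> G x + c <= p (x + y)) ->
  (forall x, S x -> G x - c <= p (x - y)) ->
  exists S' G', [/\ pf S' G', S' y, G' y = c & (forall x, S x -> S' x /\ G' x = G x)].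
Proof.
move=> pfSG nSy H1 H2.
have [[S0 Sa Sh] Ga Gh Gp] := pfSG.
pose S' z := exists x t, S x /\ z = x + t *: y.
have uniq x1 x2 t1 t2 : S x1 -> S x2 -> x1 + t1 *: y = x2 + t2 *: y -> t1 = t2 /\ x1 = x2.
  move=> Sx1 Sx2 E.
  have [tt|nt] := eqVneq t1 t2.
    by subst; split=> //; apply: (addIr (t2 *: y)).
  exfalso; apply: nSy.
  have E2 : (t1 - t2) *: y = x2 - x1.
    by rewrite scalerBl; apply/eqP; rewrite subr_eq addrAC -E addrAC subrr add0r.
  have -> : y = (t1 - t2)^-1 *: (x2 - x1).
    by rewrite -E2 scalerA mulVf ?scale1r // subr_eq0.
  by apply: (Sh); apply: (@subspB S) => //; split.
have [G' HG'] : {G' : V -> R & forall z, S' z ->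
   exists x t, [/\ S x, z = x + t *: y & G' z = G x + t * c]}.
  apply: (choice (P := fun z v => S' z ->
   exists x t, [/\ S x, z = x + t *: y & v = G x + t * c])) => z.
  case: (pselect (S' z)) => [[x [t [Sx ->]]]|nS].
  - by exists (G x + t * c) => _; exists x, t.
  - by exists 0 => /nS.
have key x t : S x -> G' (x + t *: y) = G x + t * c.
  move=> Sx; have [|x1 [t1 [Sx1 E ->]]] := HG' (x + t *: y); first by exists x, t.
  by have [-> ->] := uniq _ _ _ _ Sx Sx1 E.
exists S', G'; split.
- split.
  + split; first by exists 0, 0; rewrite scale0r addr0.
    * move=> _ _ [x1 [t1 [Sx1 ->]]] [x2 [t2 [Sx2 ->]]].
      exists (x1 + x2), (t1 + t2); split; first exact: Sa.
      by rewrite scalerDl addrACA.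
    * move=> a _ [x [t [Sx ->]]]; exists (a *: x), (a * t); split; first exact: Sh.
      by rewrite scalerDr scalerA.
  + move=> _ _ [x1 [t1 [Sx1 ->]]] [x2 [t2 [Sx2 ->]]].
    rewrite addrACA -scalerDl !key //; last exact: Sa.
    by rewrite Ga // mulrDl addrACA.
  + move=> a _ [x [t [Sx ->]]].
    rewrite scalerDr scalerA !key //; last exact: Sh.
    by rewrite Gh // mulrDr mulrA.
  + move=> _ [x [t [Sx ->]]]; rewrite key //.
    have [t0|tn0] := eqVneq t 0.
      by rewrite t0 scale0r mul0r !addr0; apply: Gp.
    case: (ltgtP t 0) => [tlt|tgt|/eqP]; last by rewrite (negPf tn0).
    * pose s := - t; have s0 : 0 < s by rewrite oppr_gt0.
      have := H2 (s^-1 *: x) (Sh _ _ Sx).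
      rewrite Gh // => /(ler_wpM2l (ltW s0)).
      rewrite mulrBr mulrA mulfV ?gt_eqF // mul1r -p_hom //.
      rewrite scalerBr scalerA mulfV ?gt_eqF // scale1r /s.
      by rewrite scaleNr opprK mulNr opprK.
    * have := H1 (t^-1 *: x) (Sh _ _ Sx).
      rewrite Gh // => /(ler_wpM2l (ltW tgt)).
      rewrite mulrDr mulrA mulfV ?gt_eqF // mul1r -p_hom //.
      by rewrite scalerDr scalerA mulfV ?gt_eqF // scale1r.
- by exists 0, 1; rewrite scale1r add0r.
- by have := key 0 1 S0; rewrite scale1r add0r mul1r (pf_G0 pfSG) add0r.
- move=> x Sx; split; first by exists x, 0; rewrite scale0r addr0.
  by have := key x 0 Sx; rewrite scale0r addr0 mul0r addr0.
Qed.

Lemma exists_c S G y : pf S G -> exists c : R,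
  (forall x, S x -> G x + c <= p (x + y)) /\ (forall x, S x -> G x - c <= p (x - y)).
Proof.
move=> pfSG; have [[S0 Sa Sh] Ga Gh Gp] := pfSG.
pose A : set R := fun r => exists x, S x /\ r = G x - p (x - y).
have AB x x' : S x -> S x' -> G x - p (x - y) <= p (x' + y) - G x'.
  move=> Sx Sx'; rewrite lerBrDr addrAC lerBlDr -Ga //.
  apply: (le_trans (Gp _ (Sa _ _ Sx Sx'))).
  have -> : x + x' = (x - y) + (x' + y) by rewrite addrACA addNr addr0.
  by apply: le_trans (p_add _ _) _; rewrite ?lexx // addrC.
have ubA : (ubound A) (p (0 + y) - G 0).
  by move=> _ [x [Sx ->]]; apply: AB.
have neA : exists r, A r by exists (G 0 - p (0 - y)), 0.
exists (sup A); split.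
- move=> x Sx; rewrite addrC -lerBrDr; apply: ge_sup => //.
  by move=> _ [x1 [Sx1 ->]]; apply: AB.
- move=> x Sx; rewrite lerBlDr addrC -lerBlDr.
  by apply: ub_le_sup; [exists (p (0 + y) - G 0) | exists x].
Qed.

Lemma ext S G y : pf S G ->
  exists S' G', [/\ pf S' G', S' y & (forall x, S x -> S' x /\ G' x = G x)].
Proof.
move=> pfSG; case: (pselect (S y)) => Sy; first by exists S, G.
have [c [H1 H2]] := exists_c y pfSG.
have [S' [G' [? ? _ ?]]] := ext_c pfSG Sy H1 H2; by exists S', G'.
Qed.

Lemma ext_list (s : seq V) S G : pf S G ->
  exists S' G', [/\ pf S' G', (forall v, v \in s -> S' v) &
                   (forall x, S x -> S' x /\ G' x = G x)].
Proof.
elim: s S G => [|v s IH] S G pfSG; first by exists S, G.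
have [S1 [G1 [pf1 S1v H1]]] := ext v pfSG.
have [S2 [G2 [pf2 S2s H2]]] := IH _ _ pf1.
exists S2, G2; split => //.
- move=> u; rewrite inE => /orP [/eqP ->|us]; last exact: S2s.
  by case: (H2 _ S1v).
- move=> x Sx; have [S1x <-] := H1 _ Sx; exact: H2.
Qed.

Lemma p0 : p 0 = 0.
Proof.
have := @p_hom (1 + 1) 0 (addr_gt0 ltr01 ltr01); rewrite scaler0 mulrDl mul1r => E.
by apply: (@addrI _ (p 0)); rewrite -E addr0.
Qed.

Lemma hahn_banach (s : seq V) (x0 : V) :
  (forall S, subsp S -> (forall u, u \in s -> S u) -> forall v, S v) ->
  exists G : V -> R, [/\ (forall x y, G (x + y) = G x + G y),
      (forall a x, G (a *: x) = a * G x), (forall x, G x <= p x) & G x0 = p x0].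
Proof.
move=> span.
pose S0 := fun z : V => z = 0.
have pf0 : pf S0 (fun _ => 0).
  split.
  - by split=> //; [move=> x y -> ->; rewrite addr0 | move=> a x ->; rewrite scaler0].
  - by move=> *; rewrite addr0.
  - by move=> *; rewrite mulr0.
  - by move=> x ->; rewrite p0.
have fin S G : pf S G -> (forall x, S x -> S0 x \/ True) ->
   exists G', [/\ (forall x y, G' (x + y) = G' x + G' y),
      (forall a x, G' (a *: x) = a * G' x), (forall x, G' x <= p x)
      & forall x, S x -> G' x = G x].
  move=> pfSG _; have [S' [G' [[subS' Ga Gh Gp] S's H]]] := ext_list s pfSG.
  have all : forall v, S' v by apply: span.
  exists G'; split => //.
  - by move=> x y; apply: Ga.
  - by move=> a x; apply: Gh.
  - by move=> x; apply: Gp.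
  - by move=> x Sx; case: (H x Sx).
have [x00|nx0] := eqVneq x0 0.
  have [G' [Ga Gh Gp HG]] := fin _ _ pf0 (fun _ _ => or_intror I).
  by exists G'; split => //; rewrite x00 HG // p0.
have [S1 [G1 [pf1 S1x G1x H1]]] := @ext_c S0 (fun _ => 0) x0 (p x0) pf0
    (fun E => ltac:(by rewrite E eqxx in nx0))
    (fun x E => ltac:(by rewrite E !add0r))
    (fun x E => ltac:(by rewrite /= E sub0r add0r (le_trans _ (p_ge0 _)) // oppr_le0)).
have [G' [Ga Gh Gp HG]] := fin _ _ pf1 (fun _ _ => or_intror I).
by exists G'; split => //; rewrite HG.
Qed.
End HBSec.

Lemma dbl_subproof n (b : bool) (i : 'I_n) : ((if b then val i + n else val i) < n.*2)%N.
Proof. case: b => /=; rewrite -addnn. by rewrite ltn_add2r. exact: ltn_addr. Qed.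
Definition dbl n b (i : 'I_n) : 'I_(n.*2) := Ordinal (dbl_subproof b i).

Lemma halfidx_dbl n b (i : 'I_n) : halfidx (dbl b i) = i.
Proof.
apply: val_inj => /=; case: b => /=; last by rewrite ltn_ord.
by rewrite ltnNge leq_addl /= addnK.
Qed.

Lemma dbl_ge n b (i : 'I_n) : (n <= dbl b i)%N = b.
Proof. by case: b => /=; rewrite ?leq_addl // leqNgt ltn_ord. Qed.

Lemma dbl_halfidx n (a : 'I_(n.*2)) : dbl (n <= a)%N (halfidx a) = a.
Proof.
apply: val_inj => /=; case: leqP => H /=; by [rewrite subnK | ].
Qed.

Lemma sum_dbl (V : zmodType) n (F : 'I_(n.*2) -> V) :
  \sum_(a : 'I_(n.*2)) F a = \sum_(i : 'I_n) \sum_(b : bool) F (dbl b i).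
Proof.
rewrite pair_bigA /= (reindex (fun p : 'I_n * bool => dbl p.2 p.1)) //.
exists (fun a => (halfidx a, (n <= a)%N)) => [[i b] _|a _] /=.
  by rewrite halfidx_dbl dbl_ge.
by rewrite dbl_halfidx.
Qed.

Section Idx.
Variables (k : nat) (n : 'I_k -> nat).
Local Notation n2 := (fun j => (n j).*2).

Definition join (i : midx n) (b : {ffun 'I_k -> bool}) : midx n2 :=
  [ffun j => dbl (b j) (i j)].

Lemma prime_join i b : prime_idx (join i b) = i.
Proof. by apply/ffunP => j; rewrite !ffunE halfidx_dbl. Qed.

Lemma join_ge i b j : (n j <= join i b j)%N = b j.
Proof. by rewrite ffunE dbl_ge. Qed.

Lemma sum_midx2 (V : zmodType) (F : midx n2 -> V) :
  \sum_(i : midx n2) F i = \sum_(i : midx n) \sum_(b : {ffun 'I_k -> bool}) F (join i b).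
Proof.
rewrite pair_bigA /= (reindex (fun p : midx n * {ffun 'I_k -> bool} => join p.1 p.2)) //.
exists (fun a => (prime_idx a, [ffun j => (n j <= a j)%N])) => [[i b] _|a _] /=.
  rewrite prime_join; congr pair; apply/ffunP => j; by rewrite ffunE join_ge.
apply/ffunP => j; rewrite !ffunE; exact: dbl_halfidx.
Qed.
End Idx.

Section CS.
Variable R : realType.
Lemma CS2 (d : nat) (u v : 'I_d -> R) :
  (\sum_a u a * v a) ^+ 2 <= (\sum_a u a ^+ 2) * (\sum_a v a ^+ 2).
Proof.
have E1 : (\sum_a u a ^+ 2) * (\sum_a v a ^+ 2) = \sum_a \sum_b (u a ^+ 2 * v b ^+ 2).
  by rewrite big_distrl; apply: eq_bigr => a _; rewrite big_distrr.
have E2 : (\sum_a u a ^+ 2) * (\sum_a v a ^+ 2) = \sum_a \sum_b (u b ^+ 2 * v a ^+ 2).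
  by rewrite E1 exchange_big.
have E3 : (\sum_a u a * v a) ^+ 2 = \sum_a \sum_b (u a * v a * (u b * v b)).
  by rewrite expr2 big_distrl; apply: eq_bigr => a _; rewrite big_distrr.
have : 0 <= \sum_a \sum_b (u a * v b - u b * v a) ^+ 2.
  by apply: sumr_ge0 => a _; apply: sumr_ge0 => b _; apply: sqr_ge0.
have -> : \sum_a \sum_b (u a * v b - u b * v a) ^+ 2 =
   (\sum_a u a ^+ 2) * (\sum_a v a ^+ 2) + (\sum_a u a ^+ 2) * (\sum_a v a ^+ 2)
   - 2 * (\sum_a u a * v a) ^+ 2.
  rewrite {1}E1 E2 E3 -big_split /= mulr_sumr -sumrB; apply: eq_bigr => a _.
  rewrite -big_split /= mulr_sumr -sumrB; apply: eq_bigr => b _; ring.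
lra.
Qed.

Lemma CS (d : nat) (u v : 'I_d -> R) :
  `|\sum_a u a * v a| <= Num.sqrt (\sum_a u a ^+ 2) * Num.sqrt (\sum_a v a ^+ 2).
Proof.
rewrite -sqrtrM; last by apply: sumr_ge0 => a _; apply: sqr_ge0.
by rewrite -sqrtr_sqr ler_wsqrtr // CS2.
Qed.
End CS.

Section Cplx.
Variable R : realType.
Lemma Re_add (x y : R[i]) : complex.Re (x + y) = complex.Re x + complex.Re y.
Proof. by case: x; case: y. Qed.
Lemma Im_add (x y : R[i]) : complex.Im (x + y) = complex.Im x + complex.Im y.
Proof. by case: x; case: y. Qed.
Lemma Re_sum (I : finType) (P : pred I) (F : I -> R[i]) :
  complex.Re (\sum_(i | P i) F i) = \sum_(i | P i) complex.Re (F i).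
Proof. by elim/big_rec2: _ => // i y1 y2 _ H; rewrite Re_add H. Qed.
Lemma Im_sum (I : finType) (P : pred I) (F : I -> R[i]) :
  complex.Im (\sum_(i | P i) F i) = \sum_(i | P i) complex.Im (F i).
Proof. by elim/big_rec2: _ => // i y1 y2 _ H; rewrite Im_add H. Qed.
Lemma ReM_real (z : R[i]) (x : R) : complex.Re (z * x%:C%C) = complex.Re z * x.
Proof. by case: z => a b /=; rewrite mulr0 subr0. Qed.
Lemma ReM_Ni (z : R[i]) : complex.Re (z * - 'i%C) = complex.Im z.
Proof. by case: z => a b /=; rewrite oppr0 mulr0 sub0r mulrN1 opprK. Qed.
End Cplx.
Section Main.
Variables (R : realType) (k' : nat) (n : 'I_k'.+1 -> nat).
Local Notation k := k'.+1.
Local Notation n2 := (fun j => (n j).*2).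
Definition lastj : 'I_k := ord_max.

Definition Pz (lam : midx n -> R[i]) (z : forall j, 'I_(n j) -> R[i]) : R[i] :=
  \sum_(i : midx n) lam i * \prod_(j : 'I_k) z j (i j).
Definition Tw (lam : midx n -> R[i]) (w : forall j, 'I_((n j).*2) -> R) : R :=
  \sum_(i : midx n2) lamtilde lam i * \prod_(j : 'I_k) w j (i j).
Definition eps (j : 'I_k) : R[i] := if j == lastj then - 'i%C else 'i%C.
Definition zz (w : forall j, 'I_((n j).*2) -> R) : forall j, 'I_(n j) -> R[i] :=
  fun j a => (w j (dbl false a))%:C%C + eps j * (w j (dbl true a))%:C%C.
Arguments zz w j a : clear implicits.

Lemma lt_last (j : 'I_k) : (val j < k.-1)%N = (j != lastj).
Proof.
by rewrite /= -(inj_eq val_inj) /= ltn_neqAle -ltnS ltn_ord andbT.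
Qed.

Lemma lamtilde_join (lam : midx n -> R[i]) (i : midx n) (b : {ffun 'I_k -> bool}) :
  lamtilde lam (join i b) =
  (let z := 'i%C ^+ #|[set j | (j != lastj) && b j]| * lam i in
   if b lastj then complex.Im z else complex.Re z).
Proof.
rewrite /lamtilde prime_join.
have -> : #|[set j : 'I_k | (val j < k.-1)%N && (n j <= join i b j)%N]| =
          #|[set j | (j != lastj) && b j]|.
  by apply: eq_card => j; rewrite !inE lt_last join_ge.
have -> : [exists j : 'I_k, (val j == k.-1) && (n j <= join i b j)%N] = b lastj.
  apply/existsP/idP => [[j /andP [/eqP jE]]|bl]; last first.
    by exists lastj; rewrite join_ge bl eqxx.
  have -> : j = lastj by apply: val_inj.
  by rewrite join_ge.
by [].
Qed.

Lemma prod_eps (b : {ffun 'I_k -> bool}) :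
  \prod_(j : 'I_k) (if b j then eps j else 1) =
  'i%C ^+ #|[set j | (j != lastj) && b j]| * (if b lastj then - 'i%C else 1).
Proof.
rewrite (bigD1 lastj) //= mulrC /eps eqxx; congr (_ * _).
rewrite (eq_bigr (fun j => if b j then 'i%C else 1)); last first.
  by move=> j /negPf ->.
rewrite -big_mkcondr /= -prodr_const; apply: eq_bigl => j.
by rewrite inE.
Qed.

Lemma K (lam : midx n -> R[i]) (w : forall j, 'I_((n j).*2) -> R) : Tw lam w = complex.Re (Pz lam (zz w)).
Proof.
rewrite /Tw sum_midx2 /Pz Re_sum; apply: eq_bigr => i _.
have -> : \prod_(j : 'I_k) zz w j (i j) = \sum_(b : {ffun 'I_k -> bool})
     (\prod_(j : 'I_k) (if b j then eps j else 1)) * (\prod_(j : 'I_k) w j (dbl (b j) (i j)))%:C%C.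
  rewrite (eq_bigr (fun j : 'I_k => \sum_(c : bool)
      (if c then eps j else 1) * (w j (dbl c (i j)))%:C%C)); last first.
    by move=> j _; rewrite big_bool /= mul1r addrC.
  rewrite bigA_distr_bigA; apply: eq_bigr => b _.
  by rewrite big_split /= rmorph_prod.
rewrite mulr_sumr Re_sum; apply: eq_bigr => b _.
rewrite lamtilde_join prod_eps /=.
rewrite (eq_bigr (fun j : 'I_k => w j (dbl (b j) (i j)))); last by move=> j _; rewrite ffunE.
set r := \prod_(j : 'I_k) _.
set t := 'i%C ^+ _.
case: (b lastj).
  by rewrite -ReM_Ni -ReM_real; congr complex.Re; ring.
by rewrite -ReM_real; congr complex.Re; ring.
Qed.
End Main.
Arguments zz {R k' n} w j a.

Section Bound.
Variables (R : realType) (k' : nat) (n N : 'I_k'.+1 -> nat).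
Variable I : forall j : 'I_k'.+1, 'M[R]_((n j).*2, N j).
Local Notation k := k'.+1.
Local Notation n2 := (fun j => (n j).*2).

Definition colI (j : 'I_k) (s : 'I_(N j)) : 'I_((n j).*2) -> R := fun a => I j a s.
Definition l2v d (v : 'I_d -> R) := Num.sqrt (\sum_a v a ^+ 2).

Definition Y (lam : midx n -> R[i]) (J : 'I_k) (w : forall j, 'I_((n j).*2) -> R)
  (a : 'I_((n J).*2)) : R :=
  \sum_(i : midx n2 | i J == a) lamtilde lam i * \prod_(j : 'I_k | j != J) w j (i j).
Arguments Y lam J w a : clear implicits.

Lemma Tw_ext (lam : midx n -> R[i]) (w1 w2 : forall j, 'I_((n j).*2) -> R) :
  (forall j a, w1 j a = w2 j a) -> Tw lam w1 = Tw lam w2.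
Proof.
move=> H; apply: eq_bigr => i _; congr (_ * _); apply: eq_bigr => j _; exact: H.
Qed.

Lemma Tw_lin (lam : midx n -> R[i]) J (w : forall j, 'I_((n j).*2) -> R) :
  Tw lam w = \sum_(a : 'I_((n J).*2)) w J a * Y lam J w a.
Proof.
rewrite /Tw (partition_big (fun i : midx n2 => i J) xpredT) //.
apply: eq_bigr => a _; rewrite /Y mulr_sumr; apply: eq_bigr => i /eqP iJ.
by rewrite (bigD1 J) //= iJ mulrCA.
Qed.

Lemma Y_ext (lam : midx n -> R[i]) J (w1 w2 : forall j, 'I_((n j).*2) -> R) :
  (forall j, j != J -> w1 j = w2 j) -> Y lam J w1 = Y lam J w2.
Proof.
move=> H; apply: funext => a; apply: eq_bigr => i _; congr (_ * _).
by apply: eq_bigr => j jJ; rewrite H.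
Qed.

Lemma l2v_ge0 d (v : 'I_d -> R) : 0 <= l2v v.
Proof. exact: sqrtr_ge0. Qed.

Lemma Tw_bound (lam : midx n -> R[i]) (Cc : R) (C0 : 0 <= Cc)
  (feas : forall s : midx N, `|Tw lam (fun j => colI (s j))| <= 1)
  (inv : forall j (x : 'rV[R]_((n j).*2)), l2R x <= Cc * linfR (x *m I j)) :
  forall m0, (m0 <= k)%N -> forall w : forall j, 'I_((n j).*2) -> R,
   (forall j : 'I_k, (m0 <= j)%N -> exists s, w j = colI s) ->
   `|Tw lam w| <= Cc ^+ m0 * \prod_(j : 'I_k | (val j < m0)%N) l2v (w j).
Proof.
elim=> [_ w Hw|m0 IH hm w Hw].
  have [s Hs] := fin_all_exists (fun j => Hw j isT).
  rewrite expr0 mul1r big_pred0 //.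
  have := feas [ffun j => s j].
  suff -> : Tw lam w = Tw lam (fun j => colI ([ffun j => s j] j)) by [].
  by apply: Tw_ext => j a; rewrite ffunE Hs.
pose J : 'I_k := Ordinal hm.
pose M := Cc ^+ m0 * \prod_(j : 'I_k | (val j < m0)%N) l2v (w j).
have M0 : 0 <= M by apply: mulr_ge0; [exact: exprn_ge0 | apply: prodr_ge0 => j _; exact: l2v_ge0].
set Y0 := Y lam J w.
have Hs (sg : 'I_(N J)) : `|\sum_a colI sg a * Y0 a| <= M.
  pose wsg := @dfwith _ (fun j => 'I_((n j).*2) -> R) w J (colI sg).
  have := IH (ltnW hm) wsg.
  have -> : \prod_(j : 'I_k | (val j < m0)%N) l2v (wsg j) =
            \prod_(j : 'I_k | (val j < m0)%N) l2v (w j).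
    apply: eq_bigr => j jm; rewrite /wsg dfwith_out //.
    by apply/eqP => /(congr1 val) /= E; rewrite E ltnn in jm.
  rewrite (Tw_lin _ J) /wsg dfwith_in.
  rewrite (@Y_ext _ J _ w); last by move=> j jJ; rewrite dfwith_out // eq_sym.
  apply.
  move=> j mj; case: (eqVneq J j) => [<-|Jj]; first by exists sg; rewrite dfwith_in.
  rewrite dfwith_out //; apply: Hw.
  by rewrite ltn_neqAle mj andbT; apply: contra Jj => /eqP E; apply/eqP/val_inj.
have Hlinf : linfR (\row_a Y0 a *m I J) <= M.
  rewrite /linfR; apply: (big_ind (fun x => x <= M)) => //.
    by move=> x y hx hy; rewrite ge_max hx hy.
  move=> sg _; rewrite mxE.
  rewrite (eq_bigr (fun a => colI sg a * Y0 a)); first exact: Hs.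
  by move=> a _; rewrite mxE mulrC.
have HY : l2R (\row_a Y0 a) <= Cc * M.
  by apply: le_trans (inv J _) _; apply: ler_wpM2l.
rewrite (Tw_lin _ J).
apply: le_trans (CS _ _) _.
have -> : Num.sqrt (\sum_a Y0 a ^+ 2) = l2R (\row_a Y0 a).
  by rewrite /l2R; congr Num.sqrt; apply: eq_bigr => a _; rewrite mxE.
rewrite (bigD1 J) /=; last by rewrite ltnSn.
rewrite (eq_bigl (fun j : 'I_k => (val j < m0)%N)); last first.
  move=> j; rewrite ltnS leq_eqVlt; case: (eqVneq j J) => [->|jJ] /=.
    by rewrite eqxx ltnn.
  rewrite andbT; case: eqP => // E; exfalso; move: jJ; by rewrite -(inj_eq val_inj) /= E eqxx.
rewrite -/(l2v (w J)).
have -> : Cc ^+ m0.+1 * (l2v (w J) * \prod_(j : 'I_k | (val j < m0)%N) l2v (w j)) =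
          l2v (w J) * (Cc * M) by rewrite /M exprS; ring.
by apply: ler_wpM2l => //; exact: l2v_ge0.
Qed.

Lemma Tw_bound_all (lam : midx n -> R[i]) (Cc : R) (C0 : 0 <= Cc)
  (feas : forall s : midx N, `|Tw lam (fun j => colI (s j))| <= 1)
  (inv : forall j (x : 'rV[R]_((n j).*2)), l2R x <= Cc * linfR (x *m I j))
  (w : forall j, 'I_((n j).*2) -> R) :
   `|Tw lam w| <= Cc ^+ k * \prod_(j : 'I_k) l2v (w j).
Proof.
have := @Tw_bound lam Cc C0 feas inv k (leqnn _) w.
rewrite (eq_bigl xpredT) //; last by move=> j; rewrite /= ltn_ord.
apply=> j; by rewrite leqNgt ltn_ord.
Qed.
End Bound.

Section Proj.
Variables (R : realType) (k' : nat) (n : 'I_k'.+1 -> nat).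
Local Notation k := k'.+1.

Definition decomp (rho : midx n -> R[i]) (x : R) :=
  exists (r : nat) (u : 'I_r -> forall j : 'I_k, 'I_(n j) -> R[i]),
        (forall i : midx n, rho i = \sum_(l < r) \prod_(j < k) u l j (i j)) /\
        x = \sum_(l < r) \prod_(j < k) l2C (u l j).

Lemma projnormE rho : projnorm rho = inf (decomp rho).
Proof. by []. Qed.

Lemma l2C_ge0 d (v : 'I_d -> R[i]) : 0 <= l2C v.
Proof. exact: sqrtr_ge0. Qed.

Lemma decomp_ge0 rho x : decomp rho x -> 0 <= x.
Proof.
move=> [r [u [_ ->]]]; apply: sumr_ge0 => l _; apply: prodr_ge0 => j _; exact: l2C_ge0.
Qed.

Lemma decomp_add rho1 rho2 x1 x2 : decomp rho1 x1 -> decomp rho2 x2 ->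
  decomp (fun i => rho1 i + rho2 i) (x1 + x2).
Proof.
move=> [r1 [u1 [H1 ->]]] [r2 [u2 [H2 ->]]].
exists (r1 + r2)%N, (fun l => match split l with inl a => u1 a | inr b => u2 b end).
split.
  move=> i; rewrite big_split_ord H1 H2; congr (_ + _); apply: eq_bigr => l _.
    by rewrite -[lshift _ _]/(unsplit (inl _)) unsplitK.
  by rewrite -[rshift _ _]/(unsplit (inr _)) unsplitK.
rewrite big_split_ord; congr (_ + _); apply: eq_bigr => l _.
  by rewrite -[lshift _ _]/(unsplit (inl _)) unsplitK.
by rewrite -[rshift _ _]/(unsplit (inr _)) unsplitK.
Qed.

Definition sc1 (c : R) (v : forall j : 'I_k, 'I_(n j) -> R[i]) : forall j : 'I_k, 'I_(n j) -> R[i] :=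
  fun j => if j == ord0 then (fun a => c%:C%C * v j a) else v j.
Arguments sc1 c v j : clear implicits.

Lemma prod_sc1 c v (i : midx n) :
  \prod_(j < k) sc1 c v j (i j) = c%:C%C * \prod_(j < k) v j (i j).
Proof.
rewrite (bigD1 ord0) //= [in RHS](bigD1 ord0) //= /sc1 eqxx mulrA; congr (_ * _).
by apply: eq_bigr => j /negPf ->.
Qed.

Lemma l2C_scale d (c : R) (v : 'I_d -> R[i]) : l2C (fun a => c%:C%C * v a) = `|c| * l2C v.
Proof.
rewrite /l2C -sqrtr_sqr -sqrtrM ?sqr_ge0 //; congr Num.sqrt.
rewrite mulr_sumr; apply: eq_bigr => a _; case: (v a) => x y /=.
rewrite !mul0r subr0 addr0; ring.
Qed.

Lemma prod_l2C_sc1 c v :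
  \prod_(j < k) l2C (sc1 c v j) = `|c| * \prod_(j < k) l2C (v j).
Proof.
rewrite (bigD1 ord0) //= [in RHS](bigD1 ord0) //= /sc1 eqxx l2C_scale mulrA.
by congr (_ * _); apply: eq_bigr => j /negPf ->.
Qed.

Lemma decomp_scale rho x (c : R) : decomp rho x ->
  decomp (fun i => c%:C%C * rho i) (`|c| * x).
Proof.
move=> [r [u [H ->]]]; exists r, (fun l => sc1 c (u l)); split.
  by move=> i; rewrite H mulr_sumr; apply: eq_bigr => l _; rewrite prod_sc1.
by rewrite mulr_sumr; apply: eq_bigr => l _; rewrite prod_l2C_sc1.
Qed.

Lemma decomp_elem (z : forall j : 'I_k, 'I_(n j) -> R[i]) :
  decomp (fun i => \prod_(j < k) z j (i j)) (\prod_(j < k) l2C (z j)).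
Proof. by exists 1%N, (fun _ => z); split => [i|]; rewrite big_ord1. Qed.

Lemma decomp_exists rho : exists x, decomp rho x.
Proof.
pose z (a : midx n) : forall j : 'I_k, 'I_(n j) -> R[i] :=
  fun j x => (if j == ord0 then rho a else 1) * ((x == a j)%:R).
pose r := #|@predT (midx n)|.
exists (\sum_(l < r) \prod_(j < k) l2C (z (enum_val l) j)), r, (fun l => z (enum_val l)).
split => // i.
rewrite -(big_enum_val (A := predT) (fun a => \prod_(j < k) z a j (i j))).
have Hz a : \prod_(j < k) z a j (i j) = rho a * (a == i)%:R.
  rewrite big_split /= (bigD1 ord0) //= [X in _ * X * _]big1; last first.
    by move=> j /negPf ->.
  rewrite mulr1; congr (_ * _).
  have [->|ai] := eqVneq a i; first by rewrite big1 // => j _; rewrite eqxx.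
  have [j ij] : exists j, i j != a j.
    apply/existsP; rewrite -negb_forall; apply: contra ai => /forallP H.
    by apply/eqP/ffunP => j; apply/eqP; rewrite eq_sym H.
  by rewrite (bigD1 j) //= (negPf ij) mul0r.
rewrite (eq_bigr _ (fun a _ => Hz a)) (bigD1 i) //= eqxx mulr1 big1 ?addr0 //.
by move=> a /negPf ->; rewrite mulr0.
Qed.

Lemma projnorm_le (rho : midx n -> R[i]) x : decomp rho x -> projnorm rho <= x.
Proof.
move=> Hx; apply: ge_inf => //; exists 0 => y; exact: decomp_ge0.
Qed.

Lemma projnorm_ge (rho : midx n -> R[i]) y : (forall x, decomp rho x -> y <= x) -> y <= projnorm rho.
Proof.
move=> H; apply: lb_le_inf => //; have [x Hx] := decomp_exists rho; by exists x.
Qed.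

Lemma projnorm_ge0 (rho : midx n -> R[i]) : 0 <= projnorm rho.
Proof. by apply: projnorm_ge => x; exact: decomp_ge0. Qed.

Lemma projnorm_add (rho1 rho2 : midx n -> R[i]) :
  projnorm (fun i => rho1 i + rho2 i) <= projnorm rho1 + projnorm rho2.
Proof.
rewrite -lerBlDr; apply: projnorm_ge => x1 H1.
rewrite lerBlDr addrC -lerBlDr; apply: projnorm_ge => x2 H2.
rewrite lerBlDr addrC; apply: projnorm_le; exact: decomp_add.
Qed.

Lemma projnorm_scale_le (rho : midx n -> R[i]) (c : R) :
  projnorm (fun i => c%:C%C * rho i) <= `|c| * projnorm rho.
Proof.
have [->|c0] := eqVneq c 0.
  rewrite normr0 mul0r; apply: projnorm_le.
  exists 0%N, (fun _ _ _ => 0); split => [i|]; by rewrite !big_ord0 ?mul0r.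
rewrite -ler_pdivrMl ?normr_gt0 //; apply: projnorm_ge => x Hx.
rewrite ler_pdivrMl ?normr_gt0 //; apply: projnorm_le; exact: decomp_scale.
Qed.
End Proj.

Section U.
Variables (R : realType) (k' : nat) (n : 'I_k'.+1 -> nat).
Local Notation k := k'.+1.
Local Notation n2 := (fun j => (n j).*2).

Lemma lp_objE (rho lam : midx n -> R[i]) :
  lp_obj rho lam = complex.Re (\sum_(i : midx n) rho i * lam i).
Proof.
pose bF : {ffun 'I_k -> bool} := [ffun => false].
pose bL : {ffun 'I_k -> bool} := [ffun j => j == (lastj k')].
rewrite /lp_obj big_mkcond /= [X in _ - X]big_mkcond /= !sum_midx2 Re_sum -sumrB.
apply: eq_bigr => i _.
rewrite (eq_bigr (fun b => if b == bF then complex.Re (rho (prime_idx (join i b))) *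
     lamtilde lam (join i b) else 0)); last first.
  move=> b _; congr (if _ then _ else _).
  apply/forallP/eqP => [H|->] ; last by move=> j; rewrite ltnNge join_ge ffunE.
  by apply/ffunP => j; rewrite ffunE; have := H j; rewrite ltnNge join_ge => /negPf.
rewrite [X in _ - X](eq_bigr (fun b => if b == bL then complex.Im (rho (prime_idx (join i b))) *
     lamtilde lam (join i b) else 0)); last first.
  move=> b _; congr (if _ then _ else _).
  apply/andP/eqP => [[/forallP H1 /existsP [j /andP [/eqP jE jb]]]|->].
    have jL : j = (lastj k') by apply: val_inj.
    apply/ffunP => j0; rewrite ffunE; have [->|j0L] := eqVneq j0 (lastj k').
      by rewrite -jL; move: jb; rewrite join_ge.
    have := H1 j0; rewrite lt_last j0L /= ltnNge join_ge => /negPf.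
    by [].
  split; first by apply/forallP => j; rewrite lt_last ltnNge join_ge ffunE; apply/implyP => /negPf ->.
  by apply/existsP; exists (lastj k'); rewrite join_ge ffunE eqxx andbT.
rewrite -!big_mkcond /= !big_pred1_eq !prime_join !lamtilde_join /= !ffunE eqxx /=.
have -> : #|[set j : 'I_k | (j != (lastj k')) && bF j]| = 0%N.
  by apply/eqP; rewrite cards_eq0; apply/eqP/setP => j; rewrite !inE ffunE andbF.
have -> : #|[set j : 'I_k | (j != (lastj k')) && bL j]| = 0%N.
  by apply/eqP; rewrite cards_eq0; apply/eqP/setP => j; rewrite !inE ffunE andNb.
rewrite expr0 !mul1r.
by case: (rho i) => a b; case: (lam i) => c d /=.
Qed.
End U.

Section U2.
Variables (R : realType) (k' : nat) (n N : 'I_k'.+1 -> nat).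
Variable I : forall j : 'I_k'.+1, 'M[R]_((n j).*2, N j).
Local Notation k := k'.+1.
Local Notation n2 := (fun j => (n j).*2).
Local Notation lastk := (lastj k').

Lemma zz_Re (w : forall j, 'I_((n j).*2) -> R) j a :
  complex.Re (zz w j a) = w j (dbl false a).
Proof. rewrite /zz /eps; case: (j == lastk) => /=; lra. Qed.

Lemma zz_Im (w : forall j, 'I_((n j).*2) -> R) j a :
  complex.Im (zz w j a) = (if j == lastk then - w j (dbl true a) else w j (dbl true a)).
Proof. rewrite /zz /eps; case: (j == lastk) => /=; lra. Qed.

Lemma l2C_zz (w : forall j, 'I_((n j).*2) -> R) j : l2C (zz w j) = l2v (w j).
Proof.
rewrite /l2C /l2v sum_dbl; congr Num.sqrt; apply: eq_bigr => a _.
rewrite big_bool zz_Re zz_Im addrC; case: (j == lastk) => //; by rewrite sqrrN.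
Qed.

Definition wz (z : forall j : 'I_k, 'I_(n j) -> R[i]) : forall j, 'I_((n j).*2) -> R :=
  fun j a => if (n j <= a)%N then
      (if j == lastk then - complex.Im (z j (halfidx a)) else complex.Im (z j (halfidx a)))
    else complex.Re (z j (halfidx a)).
Arguments wz z j a : clear implicits.

Lemma zz_wz z j a : zz (wz z) j a = z j a.
Proof.
rewrite /zz /wz !dbl_ge !halfidx_dbl /eps /=.
by case: (j == lastk); case: (z j a) => x y /=; congr Complex; lra.
Qed.

Lemma l2v_wz z j : l2v (wz z j) = l2C (z j).
Proof.
rewrite -l2C_zz; congr l2C; apply: funext => a; exact: zz_wz.
Qed.

Lemma Pz_ext (lam : midx n -> R[i]) (z1 z2 : forall j : 'I_k, 'I_(n j) -> R[i]) :
  (forall j a, z1 j a = z2 j a) -> Pz lam z1 = Pz lam z2.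
Proof.
move=> H; apply: eq_bigr => i _; congr (_ * _); apply: eq_bigr => j _; exact: H.
Qed.

Lemma Re_Pz_bound (lam : midx n -> R[i]) (Cc : R) (C0 : 0 <= Cc)
  (feas : lp_feasible I lam)
  (inv : forall j (x : 'rV[R]_((n j).*2)), l2R x <= Cc * linfR (x *m I j))
  (z : forall j : 'I_k, 'I_(n j) -> R[i]) :
  complex.Re (Pz lam z) <= Cc ^+ k * \prod_(j < k) l2C (z j).
Proof.
rewrite (@Pz_ext lam z (zz (wz z))); last by move=> j a; rewrite zz_wz.
rewrite -K.
have feas' : forall s : midx N, `|Tw lam (fun j => colI I (s j))| <= 1.
  by move=> s; rewrite ler_norml; exact: feas.
apply: le_trans (ler_norm _) _.
apply: le_trans (Tw_bound_all C0 feas' inv _) _.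
by rewrite le_eqVlt; apply/orP; left; apply/eqP; congr (_ * _); apply: eq_bigr => j _; rewrite l2v_wz.
Qed.
End U2.

Section L.
Variables (R : realType) (k' : nat) (n N : 'I_k'.+1 -> nat).
Variable I : forall j : 'I_k'.+1, 'M[R]_((n j).*2, N j).
Local Notation k := k'.+1.
Local Notation n2 := (fun j => (n j).*2).

Definition Vt := {ffun midx n -> Rcomplex R}.
Definition toF (x : Vt) : midx n -> R[i] := fun i => x i.
Definition pV (x : Vt) : R := projnorm (toF x).
Definition delta (q : midx n * bool) : Vt :=
  [ffun i => if i == q.1 then (if q.2 then 'i%C else 1) else 0].

Lemma scalecE (z : Rcomplex R) (a : R) : a *: z = (a%:C * (z : R[i]))%C.
Proof. by case: z => u v /=; rewrite /GRing.scale /=; congr Complex; rewrite ?mul0r ?subr0 ?addr0. Qed.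

Lemma V_decomp (x : Vt) : x = \sum_(i0 : midx n)
  (complex.Re (x i0) *: delta (i0, false) + complex.Im (x i0) *: delta (i0, true)).
Proof.
apply/ffunP => i; rewrite sum_ffunE (bigD1 i) //= big1 ?addr0.
  rewrite !ffunE !eqxx /= !scalecE; case: (x i) => a b /=; congr Complex; lra.
move=> i0 ii0; rewrite !ffunE eq_sym (negPf ii0) !scaler0 addr0; by [].
Qed.

Lemma pV_ge0 x : 0 <= pV x.
Proof. exact: projnorm_ge0. Qed.

Lemma pV_add x y : pV (x + y) <= pV x + pV y.
Proof.
rewrite /pV; have -> : toF (x + y) = (fun i => toF x i + toF y i).
  by apply: funext => i; rewrite /toF ffunE.
exact: projnorm_add.
Qed.

Lemma toF_scale (a : R) x : toF (a *: x) = (fun i => a%:C%C * toF x i).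
Proof. by apply: funext => i; rewrite /toF ffunE scalecE. Qed.

Lemma pV_hom (a : R) x : 0 < a -> pV (a *: x) = a * pV x.
Proof.
move=> a0; apply/eqP; rewrite eq_le; apply/andP; split.
  by rewrite /pV toF_scale; apply: le_trans (projnorm_scale_le _ _) _; rewrite ger0_norm // ltW.
rewrite -ler_pdivlMl //.
have -> : pV x = projnorm (fun i => a^-1%:C%C * toF (a *: x) i).
  rewrite /pV toF_scale; congr projnorm; apply: funext => i.
  by rewrite mulrA -rmorphM mulVf ?gt_eqF // mul1r.
apply: le_trans (projnorm_scale_le _ _) _.
by rewrite ger0_norm // invr_ge0 ltW.
Qed.

Definition spanS : seq Vt := [seq delta q | q <- enum {: midx n * bool}].

Lemma span_all (S : Vt -> Prop) : subsp S -> (forall u, u \in spanS -> S u) -> forall v, S v.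
Proof.
move=> [S0 Sa Sh] Hs v; rewrite (V_decomp v).
apply: (big_ind S) => // i0 _; apply: Sa; apply: Sh; apply: Hs;
  by apply: map_f; rewrite mem_enum.
Qed.

Variable G : Vt -> R.
Hypothesis Ga : forall x y, G (x + y) = G x + G y.
Hypothesis Gh : forall (a : R) x, G (a *: x) = a * G x.

Definition lamG (i : midx n) : R[i] := Complex (G (delta (i, false))) (- G (delta (i, true))).

Lemma G0 : G 0 = 0.
Proof. by have := Gh 0 0; rewrite scale0r mul0r. Qed.

Lemma G_formula x : G x = complex.Re (\sum_i toF x i * lamG i).
Proof.
rewrite {1}(V_decomp x) (big_morph G Ga G0) Re_sum; apply: eq_bigr => i _.
rewrite Ga !Gh /toF /lamG; case: (x i) => a b /=; lra.
Qed.
End L.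

Section Final.
Variables (R : realType) (k' : nat) (n N : 'I_k'.+1 -> nat).
Variable I : forall j : 'I_k'.+1, 'M[R]_((n j).*2, N j).
Local Notation k := k'.+1.
Variable Cc : R.
Hypothesis C0 : 0 < Cc.
Hypothesis I_norm : forall (j : 'I_k) (x : 'rV[R]_((n j).*2)), linfR (x *m I j) <= l2R x.
Hypothesis I_invnorm : forall (j : 'I_k) (x : 'rV[R]_((n j).*2)),
      l2R x <= Cc * linfR (x *m I j).
Variable rho : midx n -> R[i].

Lemma linf_ge d (y : 'rV[R]_d) s : `|y 0 s| <= linfR y.
Proof. by rewrite /linfR (bigD1 s) //= le_max lexx. Qed.

Lemma col_le1 j (sg : 'I_(N j)) : l2v (colI I sg) <= 1.
Proof.
pose x := \row_a I j a sg.
have H := I_norm x.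
have Hl : l2R x = l2v (colI I sg).
  by rewrite /l2R /l2v; congr Num.sqrt; apply: eq_bigr => a _; rewrite mxE.
have HS : (x *m I j) 0 sg = \sum_a colI I sg a ^+ 2.
  by rewrite mxE; apply: eq_bigr => a _; rewrite mxE expr2.
have := le_trans (linf_ge _ sg) H; rewrite HS Hl /l2v.
set S := \sum_a _.
have S0 : 0 <= S by apply: sumr_ge0 => a _; exact: sqr_ge0.
rewrite ger0_norm // -{1}(sqr_sqrtr S0).
have := sqrtr_ge0 S; set t := Num.sqrt S => t0 h; nra.
Qed.

Lemma obj_upper lam : lp_feasible I lam -> lp_obj rho lam <= Cc ^+ k * projnorm rho.
Proof.
move=> feas; rewrite lp_objE.
have Ck : 0 < Cc ^+ k by apply: exprn_gt0.
rewrite -ler_pdivrMl //; apply: projnorm_ge => x [r [u [Hr ->]]].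
rewrite ler_pdivrMl //.
have -> : \sum_i rho i * lam i = \sum_(l < r) Pz lam (u l).
  rewrite (eq_bigr (fun i => \sum_(l < r) lam i * \prod_(j < k) u l j (i j))); last first.
    by move=> i _; rewrite Hr mulr_suml; apply: eq_bigr => l _; rewrite mulrC.
  by rewrite exchange_big.
rewrite Re_sum mulr_sumr; apply: ler_sum => l _.
by apply: Re_Pz_bound => //; exact: ltW.
Qed.

Lemma lower_lam : exists lam, lp_feasible I lam /\ lp_obj rho lam = projnorm rho.
Proof.
have [G [Ga Gh Gp Gx0]] := @hahn_banach R (Vt R n) (@pV R k' n) (@pV_ge0 R k' n)
   (@pV_add R k' n) (@pV_hom R k' n) (spanS R n) [ffun i => rho i] (@span_all R k' n).
have toFx0 : toF [ffun i => rho i] = rho by apply: funext => i; rewrite /toF ffunE.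
exists (lamG G); split; last first.
  rewrite lp_objE -[in RHS]toFx0 -/(pV _) -Gx0 G_formula //.
  by congr complex.Re; apply: eq_bigr => i _; rewrite toFx0.
move=> s; rewrite -ler_norml.
change (`|Tw (lamG G) (fun j => colI I (s j))| <= 1).
rewrite K.
set z := zz _.
pose xz : Vt R n := [ffun i : midx n => \prod_(j < k) z j (i j)].
have toFxz : toF xz = (fun i => \prod_(j < k) z j (i j)).
  by apply: funext => i; rewrite /toF ffunE.
have -> : complex.Re (Pz (lamG G) z) = G xz.
  rewrite G_formula //; congr complex.Re; apply: eq_bigr => i _.
  by rewrite toFxz mulrC.
have Hp : pV xz <= \prod_(j < k) l2C (z j).
  by rewrite /pV toFxz; apply: projnorm_le; exact: decomp_elem.
have Hle1 : \prod_(j < k) l2C (z j) <= 1.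
  apply: prodr_ile1 => j _; rewrite /z l2C_zz l2v_ge0 /=; exact: col_le1.
rewrite ler_norml; apply/andP; split; last first.
  by apply: le_trans (Gp _) (le_trans Hp Hle1).
rewrite lerNl -mulN1r -Gh; apply: le_trans (Gp _) _.
rewrite /pV toF_scale toFxz; apply: le_trans (projnorm_scale_le _ _) _.
rewrite normrN normr1 mul1r; apply: le_trans Hle1.
by apply: projnorm_le; exact: decomp_elem.
Qed.

Local Open Scope classical_set_scope.
Lemma lp_bounds : projnorm rho <= lp_value I rho /\ lp_value I rho <= Cc ^+ k * projnorm rho.
Proof.
have ne : [set lp_obj rho lam | lam in [set lam | lp_feasible I lam]] !=set0.
  exists (lp_obj rho (fun _ => 0)), (fun _ => 0) => // s.
  rewrite big1 ?lerN10 ?ler01 // => i _.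
  rewrite /lamtilde mulr0; case: ifP => _; by rewrite mul0r.
have ub : ubound [set lp_obj rho lam | lam in [set lam | lp_feasible I lam]]
                 (Cc ^+ k * projnorm rho).
  by move=> _ [lam Hlam <-]; exact: obj_upper.
split; last exact: ge_sup.
have [lam [Hf Ho]] := lower_lam.
rewrite -Ho; apply: ub_le_sup; first by exists (Cc ^+ k * projnorm rho).
by exists lam.
Qed.
End Final.

Theorem theorem2 (R : realType) (k : nat) (hk : (1 <= k)%N) (n : 'I_k -> nat)
  (m : nat) (hm : (2 <= m)%N) (N : 'I_k -> nat)
  (I : forall j : 'I_k, 'M[R]_((n j).*2, N j))
  (I_inj : forall j : 'I_k, injective (fun x : 'rV[R]_((n j).*2) => x *m I j))
  (I_norm : forall (j : 'I_k) (x : 'rV[R]_((n j).*2)), linfR (x *m I j) <= l2R x)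
  (I_invnorm : forall (j : 'I_k) (x : 'rV[R]_((n j).*2)),
      l2R x <= m%:R / (m%:R - 1) * linfR (x *m I j))
  (rho : midx n -> R[i]) :
  projnorm rho <= lp_value I rho /\
  lp_value I rho <= (m%:R / (m%:R - 1)) ^+ k * projnorm rho.
Proof.
case: k hk n N I I_inj I_norm I_invnorm rho => [//|k'] _ n N I _ Inorm Iinv rho.
have C0 : 0 < m%:R / (m%:R - 1) :> R.
  have m2 : (2 : R) <= m%:R by rewrite ler_nat.
  apply: divr_gt0; lra.
exact: (lp_bounds C0 Inorm Iinv rho).
Qed.
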